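(* Let $K\ge3$. If for all $k\in[K]$ there is a function $g_k$ (defined on $[0,1]$) with $f_k({\bm{p}})=g_k\!\left(\frac{p_k}{|{\bm{p}}|}\right)$ for all ${\bm{p}}\in\mathbb{R}^K_{\ge0}\setminus\{\mathbf{0}\}$, then the Conservation Condition $$(f_1({\bm{p}}),\dots,f_K({\bm{p}}))=\nabla L^{\mathrm{same}}({\bm{p}})\quad\text{for all }{\bm{p}}\in\mathbb{R}^K_{\ge0}\setminus\{\mathbf{0}\}$$ holds if and only if all $g_k$ are constant functions.
   Context: Setting: distributions $\mathcal{D}_1,\dots,\mathcal{D}_K$ on $\mathcal{Z}$, a loss $\ell(h,{\bm{z}})$, $N\ge1$, and a learning algorithm $\mathcal{A}:\mathcal{Z}^N\to\mathcal{H}$. For ${\bm{q}}\in\Delta_K=\{{\bm{r}}\ge0:\sum_kr_k=1\}$ let $\mathcal{D}_{\bm{q}}=\sum_kq_k\mathcal{D}_k$ and $\bar e_k({\bm{q}})=\mathbb{E}_{S\sim\mathcal{D}_{\bm{q}}^N}\mathbb{E}_{{\bm{z}}\sim\mathcal{D}_k}[\ell(\mathcal{A}(S),{\bm{z}})]$. For ${\bm{p}}\in\mathbb{R}^K_{\ge0}\setminus\{\mathbf{0}\}$, $|{\bm{p}}|=\sum_kp_k$, $f_k({\bm{p}})=\bar e_k({\bm{p}}/|{\bm{p}}|)$ and $L^{\mathrm{same}}({\bm{p}})=\sum_kp_kf_k({\bm{p}})$. *)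

(* Defs.v *)
From HB Require Import structures.
From mathcomp Require Import all_boot all_order all_algebra.
From mathcomp Require Import all_classical all_reals all_analysis.
Set Implicit Arguments. Unset Strict Implicit. Unset Printing Implicit Defensive.
Import Order.TTheory GRing.Theory Num.Theory.
Import numFieldNormedType.Exports.
Local Open Scope classical_set_scope.
Local Open Scope ring_scope.

Section Setting.
Variables (R : realType) (d : measure_display) (Z : measurableType d).

(* nonnegative weight used in the mixture (on the simplex it is just q k) *)
Lemma nnw_ge0 (x : R) : 0 <= Num.max x 0.
Proof. by rewrite le_max lexx orbT. Qed.
Definition nnw (x : R) : {nonneg R} := @NngNum R (Num.max x 0) (nnw_ge0 x).

Definition mixture (K : nat) (q : 'I_K -> R)
    (D : 'I_K -> probability Z R) : {measure set Z -> \bar R} :=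
  msum (fun n : nat => match insub n with
                       | Some i => mscale (nnw (q i)) (D i)
                       | None => mzero
                       end) K.

(* expectation over  S ~ mu^n  (S an n-tuple of i.i.d. draws from mu),
   computed as the iterated integral  int mu(dz1) ... int mu(dzn) F(z1,...,zn) *)
Fixpoint iter_expect (mu : {measure set Z -> \bar R}) (n : nat) {struct n} :
    (n.-tuple Z -> \bar R) -> \bar R :=
  match n return (n.-tuple Z -> \bar R) -> \bar R with
  | 0 => fun F => F [tuple]
  | n'.+1 => fun F =>
      (\int[mu]_z @iter_expect mu n' (fun s : n'.-tuple Z => F [tuple of z :: s]))%E
  end.

Variables (H : Type) (K N : nat) (D : 'I_K -> probability Z R)
  (loss : H -> Z -> R) (A : N.-tuple Z -> H).

Definition ebar (k : 'I_K) (q : 'I_K -> R) : R :=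
  fine (@iter_expect (mixture q D) N
          (fun S => \int[D k]_z (loss (A S) z)%:E)%E).

Definition pnorm1 (p : 'I_K -> R) : R := \sum_(k < K) p k.

Definition dom (p : 'I_K -> R) : Prop := (forall k, 0 <= p k) /\ p <> (fun _ => 0).

Definition fk (k : 'I_K) (p : 'I_K -> R) : R := ebar k (fun j => p j / pnorm1 p).

Definition Lsame (p : 'I_K -> R) : R := \sum_(k < K) p k * fk k p.

Definition shift (p : 'I_K -> R) (k : 'I_K) (h : R) : 'I_K -> R :=
  fun j => if j == k then p j + h else p j.

(* the k-th partial derivative of F at p equals l, the limit being taken
   within the domain (one-sided at boundary points where p_k = 0) *)
Definition has_partial (F : ('I_K -> R) -> R) (p : 'I_K -> R) (k : 'I_K) (l : R) : Prop :=
  (fun h : R => (F (shift p k h) - F p) / h) @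
    within (fun h : R => dom (shift p k h)) (0 : R)^' --> l.

Definition conservation : Prop :=
  forall p, dom p -> forall k, has_partial Lsame p k (fk k p).

End Setting.

(* Main.v *)
Require Import Defs.
From HB Require Import structures.
From mathcomp Require Import all_boot all_order all_algebra.
From mathcomp Require Import all_classical all_reals all_analysis.
From mathcomp Require Import ring lra.
Import Order.TTheory GRing.Theory Num.Theory.
Import numFieldNormedType.Exports.
Local Open Scope classical_set_scope.
Local Open Scope ring_scope.

Set Implicit Arguments. Unset Strict Implicit.

Section Gen.
Variables (R : realType) (K : nat).
Implicit Types (p : 'I_K -> R).

Lemma dom_shift_pos p k (h : R) : dom p -> 0 <= h -> dom (Defs.shift p k h).
Proof.
move=> [p0 pn0] h0; split.
  by move=> m; rewrite /Defs.shift; case: ifP => _; rewrite ?addr_ge0.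
move=> e; apply: pn0; apply: funext => m.
have := congr1 (fun f => f m) e; rewrite /Defs.shift.
case: eqP => [->|_] //= hk.
have := p0 k; have : p k + h = 0 by [].
move=> H1 H2; apply/eqP; rewrite eq_le H2 andbT; lra.
Qed.

Lemma dom_shift_small p k (h : R) : dom p -> `|h| < p k -> dom (Defs.shift p k h).
Proof.
move=> [p0 pn0] hh; split.
  move=> m; rewrite /Defs.shift; case: eqP => [->|_] //=.
  have := ler_norm (- h); rewrite normrN; lra.
move=> e; have := congr1 (fun f => f k) e; rewrite /Defs.shift eqxx /=.
have := ler_norm (- h); rewrite normrN; lra.
Qed.

Lemma at_right_sub p k : dom p ->
  (0:R)^'+ `=>` within (fun h => dom (Defs.shift p k h)) (0:R)^'.
Proof.
move=> dp P; rewrite /within /at_right /dnbhs /within => H.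
move: H => /= H.
have {}H : \forall x \near (0:R), x != 0 -> dom (Defs.shift p k x) -> P x := H.
apply: filterS H => x /= H xpos; apply: H; first by rewrite gt_eqF.
by apply: dom_shift_pos => //; rewrite ltW.
Qed.

Lemma partial_right (F : ('I_K -> R) -> R) p k l : dom p -> has_partial F p k l ->
  (fun h => (F (Defs.shift p k h) - F p) / h) @ (0:R)^'+ --> l.
Proof. by move=> dp hp; apply: cvg_trans hp; apply: cvg_app; exact: at_right_sub. Qed.

Lemma partial_two (F : ('I_K -> R) -> R) p k l : dom p -> 0 < p k -> has_partial F p k l ->
  (fun h => (F (Defs.shift p k h) - F p) / h) @ (0:R)^' --> l.
Proof.
move=> dp pk hp; apply: cvg_trans hp; apply: cvg_app => P.
move=> H.
have {}H : \forall x \near (0:R)^', dom (Defs.shift p k x) -> P x := H.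
have HD0 : \forall x \near (0:R), dom (Defs.shift p k x).
  by apply: filterS (nbhs0_lt pk) => x; exact: dom_shift_small.
have HD : \forall x \near (0:R)^', dom (Defs.shift p k x) := nbhs_dnbhs HD0.
apply: filter_app HD; apply: filterS H => x H1 H2; exact: H1.
Unshelve. all: by end_near.
Qed.

Lemma deriv_of (f : R -> R) t l (q : R -> R) :
  (forall h, q h = (f (t + h) - f t) / h) -> q @ (0:R)^' --> l -> is_derive t 1 f l.
Proof.
move=> hq hl.
have e : (fun h : R => h^-1 *: ((f \o shift t) (h *: 1) - f t)) = q.
  by apply: funext => h; rewrite hq /= [_%:A]mulr1 (addrC h t) [_ *: _]mulrC.
split; first by rewrite /derivable e; exact: cvgP hl.
by rewrite /derive e; exact: (cvg_lim (@Rhausdorff R)).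
Qed.

Lemma rightcont (f : R -> R) (l : R) :
  (f h - f 0) / h @[h --> (0:R)^'+] --> l -> f x @[x --> (0:R)^'+] --> f 0.
Proof.
move=> hl.
have H1 : f 0 + t * ((f t - f 0) / t) @[t --> (0:R)^'+] --> f 0 + 0 * l.
  apply: cvgD; first exact: cvg_cst.
  apply: cvgM => //; apply: cvg_at_right_filter; exact: cvg_id.
rewrite mul0r addr0 in H1; apply: cvg_trans H1; apply: near_eq_cvg.
near=> t; have t0 : 0 < t by near: t; exact: nbhs_right_gt.
by rewrite mulrC divfK ?gt_eqF // addrC subrK.
Unshelve. all: by end_near.
Qed.

End Gen.

Section V3.
Variables (R : realType) (K : nat) (i j l : 'I_K).
Hypotheses (ij : i != j) (il : i != l) (jl : j != l).

Definition v3 (a b c : R) : 'I_K -> R :=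
  fun m => if m == i then a else if m == j then b else if m == l then c else 0.

Let ji : (j == i) = false. Proof. by rewrite eq_sym (negbTE ij). Qed.
Let li : (l == i) = false. Proof. by rewrite eq_sym (negbTE il). Qed.
Let lj : (l == j) = false. Proof. by rewrite eq_sym (negbTE jl). Qed.

Lemma v3i a b c : v3 a b c i = a.
Proof using ij il jl. by rewrite /v3 eqxx. Qed.
Lemma v3j a b c : v3 a b c j = b.
Proof using ij il jl. by rewrite /v3 ji eqxx. Qed.
Lemma v3l a b c : v3 a b c l = c.
Proof using ij il jl. by rewrite /v3 li lj eqxx. Qed.

Lemma v3_sum a b c (w : 'I_K -> R) :
  \sum_(m < K) v3 a b c m * w m = a * w i + b * w j + c * w l.
Proof using ij il jl.
rewrite (bigD1 i) //= (bigD1 j) //=; last by rewrite eq_sym.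
rewrite (bigD1 l) //=; last by rewrite eq_sym il eq_sym jl.
rewrite big1 ?addr0 ?v3i ?v3j ?v3l ?addrA //.
move=> m Hm; rewrite /v3.
have [ei|mi] := eqVneq m i; first by rewrite ei eqxx /= ?andbF in Hm.
have [ej|mj] := eqVneq m j; first by rewrite ej eqxx /= ?andbF in Hm.
have [el|ml] := eqVneq m l; first by rewrite el eqxx /= ?andbF in Hm.
by rewrite mul0r.
Qed.

Lemma v3_norm a b c : pnorm1 (v3 a b c) = a + b + c.
Proof using ij il jl.
have := v3_sum a b c (fun _ => 1); rewrite /= !mulr1 => <-.
by rewrite /pnorm1; apply: eq_bigr => m _; rewrite mulr1.
Qed.

Lemma v3_dom a b c : 0 <= a -> 0 <= b -> 0 <= c -> 0 < a + b + c -> dom (v3 a b c).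
Proof using ij il jl.
move=> a0 b0 c0 s0; split.
  by move=> m; rewrite /v3; do 3 (case: ifP => _ //).
move=> e.
have ea := congr1 (fun f => f i) e; have eb := congr1 (fun f => f j) e.
have ec := congr1 (fun f => f l) e.
rewrite /= v3i in ea; rewrite /= v3j in eb; rewrite /= v3l in ec; lra.
Qed.

Lemma v3_shift_i a b c h : Defs.shift (v3 a b c) i h = v3 (a + h) b c.
Proof using ij il jl.
apply: funext => m; rewrite /Defs.shift /v3.
by case: (m == i).
Qed.

Lemma v3_shift_j a b c h : Defs.shift (v3 a b c) j h = v3 a (b + h) c.
Proof using ij il jl.
apply: funext => m; rewrite /Defs.shift /v3.
case: (boolP (m == j)) => [/eqP ->|/negbTE mj]; rewrite ?ji ?eqxx ?mj //.
Qed.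

Lemma v3_shift_l a b c h : Defs.shift (v3 a b c) l h = v3 a b (c + h).
Proof using ij il jl.
apply: funext => m; rewrite /Defs.shift /v3.
case: (boolP (m == l)) => [/eqP ->|/negbTE ml]; rewrite ?li ?lj ?eqxx ?ml //.
Qed.

End V3.

Unset Implicit Arguments.
Section Main.
Variables (R : realType) (K : nat) (F : ('I_K -> R) -> R)
  (f : 'I_K -> ('I_K -> R) -> R) (g : 'I_K -> R -> R).
Hypothesis hF : forall p, F p = \sum_(m < K) p m * f m p.
Hypothesis hg : forall k p, dom p -> f k p = g k (p k / pnorm1 p).

Lemma ratio_in (q : 'I_K -> R) m : dom q -> 0 <= q m / pnorm1 q <= 1.
Proof.
move=> [q0 qn0].
have s0 : 0 <= pnorm1 q by apply: sumr_ge0 => k _; exact: q0.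
have sp : 0 < pnorm1 q.
  rewrite lt_neqAle s0 andbT eq_sym; apply/negP => /eqP e.
  apply: qn0; apply: funext => k.
  exact: (psumr_eq0P (fun k _ => q0 k) e).
have qm : q m <= pnorm1 q.
  rewrite /pnorm1 (bigD1 m) //= lerDl; apply: sumr_ge0 => k _; exact: q0.
apply/andP; split; first by apply: divr_ge0.
by rewrite ler_pdivrMr // mul1r.
Qed.

Lemma backward : (forall k, exists c : R, forall x : R, 0 <= x <= 1 -> g k x = c) ->
  forall p, dom p -> forall k, has_partial F p k (f k p).
Proof.
move=> hcst.
have fval m q : dom q -> f m q = g m 1.
  move=> dq; rewrite hg //; have [c hc'] := hcst m.
  by rewrite !hc' ?ratio_in // ler01 lexx.
move=> p dp k; rewrite /has_partial fval //.
have C : (fun _ : R => g k 1) @ within (fun h : R => dom (Defs.shift p k h)) (0:R)^' --> g k 1.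
  by apply: cvg_cst.
apply: cvg_trans; last exact: C.
apply: near_eq_cvg.
have H : \forall x \near (0:R), x != 0 -> dom (Defs.shift p k x) ->
    g k 1 = (F (Defs.shift p k x) - F p) / x.
  apply: filterE => x x0 dx.
  rewrite !hF (eq_bigr (fun m => Defs.shift p k x m * g m 1)); last first.
    by move=> m _; rewrite fval.
  rewrite (eq_bigr (fun m => p m * g m 1) (fun m _ => congr1 _ (fval m p dp))).
  rewrite -sumrB (bigD1 k) //= big1 ?addr0.
    by rewrite /Defs.shift eqxx; field.
  by move=> m /negbTE mk; rewrite /Defs.shift mk subrr.
exact: H.
Qed.

Hypothesis hc : forall p, dom p -> forall k, has_partial F p k (f k p).

Section Dist.
Variables (i j l : 'I_K).
Hypotheses (ij : i != j) (il : i != l) (jl : j != l).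
Local Notation v := (v3 i j l).
Let Ei := @v3i R K i j l ij il jl. Let Ej := @v3j R K i j l ij il jl. Let El := @v3l R K i j l ij il jl.
Let Si := @v3_shift_i R K i j l ij il jl. Let Sj := @v3_shift_j R K i j l ij il jl.
Let Sl := @v3_shift_l R K i j l ij il jl. Let Dv := @v3_dom R K i j l ij il jl.
Let Nv := @v3_norm R K i j l ij il jl.

Lemma FL a b c : F (v a b c) = a * f i (v a b c) + b * f j (v a b c) + c * f l (v a b c).
Proof. by rewrite hF (v3_sum ij il jl). Qed.

Lemma deriv_i (b c t : R) : 0 <= b -> 0 <= c -> 0 < t ->
  is_derive t 1 (fun t => F (v t b c)) (f i (v t b c)).
Proof.
move=> b0 c0 t0.
have dv : dom (v t b c) by apply: Dv => //; [exact: ltW | lra].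
apply: (deriv_of (q := fun h => (F (Defs.shift (v t b c) i h) - F (v t b c)) / h)).
  by move=> h; rewrite Si.
apply: partial_two => //; first by rewrite Ei.
exact: hc.
Qed.

Lemma right_i (b c : R) : 0 <= b -> 0 <= c -> 0 < b + c ->
  (F (v t b c) - F (v 0 b c)) / t @[t --> (0:R)^'+] --> f i (v 0 b c).
Proof.
move=> b0 c0 s0.
have dv : dom (v 0 b c) by apply: Dv => //; lra.
have := partial_right dv (hc _ dv i).
have -> : (fun h => (F (Defs.shift (v 0 b c) i h) - F (v 0 b c)) / h) =
          (fun h => (F (v h b c) - F (v 0 b c)) / h).
  by apply: funext => h; rewrite Si add0r.
by [].
Qed.


Lemma fi_val a b c : 0 <= a -> 0 <= b -> 0 <= c -> 0 < a + b + c ->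
  f i (v a b c) = g i (a / (a + b + c)).
Proof. by move=> *; rewrite hg ?Ei ?Nv //; apply: Dv. Qed.
Lemma fj_val a b c : 0 <= a -> 0 <= b -> 0 <= c -> 0 < a + b + c ->
  f j (v a b c) = g j (b / (a + b + c)).
Proof. by move=> *; rewrite hg ?Ej ?Nv //; apply: Dv. Qed.
Lemma fl_val a b c : 0 <= a -> 0 <= b -> 0 <= c -> 0 < a + b + c ->
  f l (v a b c) = g l (c / (a + b + c)).
Proof. by move=> *; rewrite hg ?El ?Nv //; apply: Dv. Qed.

Lemma Phi a h c : 0 < a -> 0 < h -> 0 < c ->
  F (v a h c) - F (v a 0 (c + h)) = F (v 0 h c) - F (v 0 0 (c + h)).
Proof.
move=> a0 h0 c0.
set Φ := (fun t => F (v t h c)) - (fun t => F (v t 0 (c + h))).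
set df := fun t => f i (v t h c) - f i (v t 0 (c + h)).
have dPhi (x : R) : 0 < x -> is_derive x 1 Φ (df x).
  move=> x0; apply: is_deriveB; apply: deriv_i => //; lra.
have df0 (x : R) : 0 < x -> df x = 0.
  move=> x0; rewrite /df fi_val ?fi_val; try lra.
  by rewrite addr0 (addrC c h) addrA subrr.
have cont : {within `[0, a], continuous Φ}.
  apply: derivable_oo_LRcontinuous_within; split.
  - move=> x; rewrite in_itv /= => /andP[x0 _].
    exact: (@ex_derive _ _ _ _ _ _ _ (dPhi x x0)).
  - apply: (rightcont (l := df 0)).
    have H1 := right_i h c (ltW h0) (ltW c0) (ltac:(lra)).
    have H2 := right_i 0 (c + h) (lexx 0) (ltac:(lra) : 0 <= c + h) (ltac:(lra)).
    apply: cvg_trans (cvgB H1 H2); apply: near_eq_cvg.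
    by apply: filterE => t; rewrite /Φ /= !fctE; ring.
  - apply: cvg_at_left_filter.
    apply: differentiable_continuous; rewrite -derivable1_diffP.
    exact: (@ex_derive _ _ _ _ _ _ _ (dPhi a a0)).
have [x] := MVT a0 (fun x xin => dPhi x (ltac:(move: xin; rewrite in_itv /=; case/andP => //))) cont.
rewrite in_itv /= => /andP[x0 _].
rewrite df0 // mul0r => /eqP; rewrite subr_eq0 /Φ /= !fctE => /eqP E.
lra.
Qed.


Lemma step1 a c : 0 < a -> 0 < c -> g l (c / (a + c)) = g l 1.
Proof.
move=> a0 c0.
have dP0 : dom (v a 0 c) by apply: Dv; lra.
have dP1 : dom (v 0 0 c) by apply: Dv; lra.
have L1 := partial_right dP0 (hc _ dP0 j).
have L2 := partial_right dP0 (hc _ dP0 l).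
have L3 := partial_right dP1 (hc _ dP1 j).
have e1 : f j (v a 0 c) = g j 0 by rewrite fj_val ?mul0r //; lra.
have e2 : f l (v a 0 c) = g l (c / (a + c)) by rewrite fl_val ?addr0 //; lra.
have e3 : f j (v 0 0 c) = g j 0 by rewrite fj_val ?mul0r //; lra.
rewrite e1 in L1; rewrite e2 in L2; rewrite e3 in L3.
have U (e : R) : 0 < e -> F (v 0 0 e) = e * g l 1.
  move=> e0; rewrite FL fl_val ?add0r ?divff ?gt_eqF //; try lra; ring.
have L4 := cvgB (cvgD L2 L3) (cvg_cst (g l 1)).
have L5 : (fun h => (F (Defs.shift (v a 0 c) j h) - F (v a 0 c)) / h) @ (0:R)^'+
    --> g l (c / (a + c)) + g j 0 - g l 1.
  apply: cvg_trans; last exact: L4.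
  apply: near_eq_cvg.
  near=> h; have h0 : 0 < h by near: h; exact: nbhs_right_gt.
  rewrite /= !fctE !Sj Sl !add0r.
  have E := Phi a h c a0 h0 c0.
  have Uc := U c c0; have Uch := U (c + h) (ltac:(lra)).
  rewrite Uch in E; rewrite Uc.
  have -> : F (v a h c) = F (v a 0 (c + h)) + F (v 0 h c) - (c + h) * g l 1 by lra.
  by field; rewrite gt_eqF.
have := cvg_lim (@Rhausdorff R) L1; rewrite (cvg_lim (@Rhausdorff R) L5).
move/(_ (at_right_proper_filter _)); lra.
Unshelve. all: by end_near.
Qed.
End Dist.

Lemma ratio01 (x y : R) : 0 < x -> 0 < y -> 0 < x / (x + y) < 1.
Proof.
move=> x0 y0; apply/andP; split; first by apply: divr_gt0; lra.
by rewrite ltr_pdivrMr; lra.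
Qed.

Lemma three (hK : (3 <= K)%N) (k : 'I_K) :
  exists i j : 'I_K, [/\ i != j, i != k & j != k].
Proof.
have h0 : (0 < K)%N by apply: leq_trans hK.
have h1 : (1 < K)%N by apply: leq_trans hK.
have h2 : (2 < K)%N by [].
set o0 := Ordinal h0; set o1 := Ordinal h1; set o2 := Ordinal h2.
have [e0|n0] := eqVneq k o0; first by exists o1, o2; rewrite e0.
have [e1|n1] := eqVneq k o1; first by exists o0, o2; rewrite e1.
by exists o0, o1; rewrite !(eq_sym _ k).
Qed.


Lemma step1' (hK : (3 <= K)%N) l y : 0 < y < 1 -> g l y = g l 1.
Proof.
move=> /andP[y0 y1].
have [i [j [ij il jl]]] := three hK l.
have := step1 _ _ _ ij il jl _ _ (ltac:(lra) : 0 < 1 - y) y0.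
by rewrite (_ : 1 - y + y = 1) ?divr1 //; ring.
Qed.

Lemma step2 (hK : (3 <= K)%N) j : g j 0 = g j 1.
Proof.
have [i [l [il ij lj]]] := three hK j.
have jl : j != l by rewrite eq_sym.
have dP1 : dom (v3 (R:=R) i j l 0 0 1) by apply: (@v3_dom R K i j l ij il jl 0 0 1); lra.
have L3 := partial_right dP1 (hc _ dP1 j).
have e3 : f j (v3 i j l 0 0 1) = g j 0 by rewrite (fj_val _ _ _ ij il jl) ?mul0r //; lra.
rewrite e3 in L3.
have L4 : (fun h => (F (Defs.shift (v3 i j l 0 0 1) j h) - F (v3 i j l 0 0 1)) / h)
    @ (0:R)^'+ --> g j 1.
  have C : (fun _ : R => g j 1) @ (0:R)^'+ --> g j 1 by apply: cvg_cst.
  apply: cvg_trans; last exact: C.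
  apply: near_eq_cvg.
  near=> h; have h0 : 0 < h by near: h; exact: nbhs_right_gt.
  rewrite /= (v3_shift_j ij il jl) add0r !(FL _ _ _ ij il jl).
  rewrite (fj_val _ _ _ ij il jl) ?(fl_val _ _ _ ij il jl); try lra.

  rewrite !add0r !mul0r !add0r !mul1r invr1.
  rewrite (step1' hK j _ (ratio01 _ _ h0 (ltr01 : (0:R) < 1))).
  rewrite -div1r (addrC h 1) (step1' hK l _ (ratio01 _ _ (ltr01 : (0:R) < 1) h0)).
  by field; rewrite gt_eqF.
have := cvg_lim (@Rhausdorff R) L3; rewrite (cvg_lim (@Rhausdorff R) L4).
by move/(_ (at_right_proper_filter _)).
Unshelve. all: by end_near.
Qed.
End Main.

Unset Implicit Arguments.
Local Close Scope classical_set_scope.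

Theorem lemma7p3 (R : realType) (d : measure_display) (Z : measurableType d)
  (H : Type) (K N : nat) (D : 'I_K -> probability Z R)
  (loss : H -> Z -> R) (A : N.-tuple Z -> H) (g : 'I_K -> R -> R) :
  (3 <= K)%N -> (1 <= N)%N ->
  (forall (k : 'I_K) (p : 'I_K -> R), dom p ->
     fk D loss A k p = g k (p k / pnorm1 p)) ->
  (conservation D loss A <->
   forall k : 'I_K, exists c : R, forall x : R, 0 <= x <= 1 -> g k x = c).
Proof.
move=> hK _ hg.
have hF : forall p, Lsame D loss A p = \sum_(m < K) p m * fk D loss A m p by [].
split.
- move=> hc k; exists (g k 1) => x /andP[x0 x1].
  have [->|xn0] := eqVneq x 0; first exact: (step2 _ _ _ _ _ hF hg hc hK).
  have [->|xn1] := eqVneq x 1; first by [].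
  apply: (step1' _ _ _ _ _ hF hg hc hK).
  by rewrite lt_neqAle eq_sym xn0 x0 /= lt_neqAle xn1 x1.
- by move=> Hc; exact: (backward _ _ _ _ _ hF hg Hc).
Qed.
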